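(* Under the assumption $\mathrm{rank}(D_{\mathrm{ac}})<n$ (the adversary does not have access to all the communication channels between the two side filters), the residual signal $res_{\mathrm{SA}}(t)=y_{\mathrm{p}}(t)-C\hat{x}^{\mathrm{SA}}(t)$ is affected by the sensor cyber attack $a_{\mathrm{y}}(t)$ and is decoupled from $a_{\mathrm{u}}(t)$, $f_1(t)$ and $f_2(t)$ (i.e. its trajectory is not affected by these signals), if, for $\ell=\mathrm{SA}$: $T^{\ell}=I-H^{\ell}C$; $(I-H^{\ell}C)F_1=0$; $(I-H^{\ell}C)F_2=0$; $L^{\ell}D_{\mathrm{ac}}=0$; $L_{\mathrm{p}}^{\ell}D_{\mathrm{ac}}=0$; the triplet $(C,F^{\ell},L^{\ell})$ is left-invertible; $\check{F}^{\ell}=\begin{bmatrix}F^{\ell} & -L^{\ell}\\ 0 & F_{\mathrm{p}}^{\ell}+L_{\mathrm{p}}^{\ell}\end{bmatrix}$ is Hurwitz; and moreover: 1) $T_{\mathrm{p}}^{\mathrm{SA}}B_{\mathrm{a}}=0$; 2) the Rosenbrock system matrix $$P_{\Sigma_{\mathrm{y}}}(s)=\begin{bmatrix} sI-(F_{\mathrm{p}}^{\mathrm{SA}}+L_{\mathrm{p}}^{\mathrm{SA}}) & K_{\mathrm{p}}^{\mathrm{SA}}D_{\mathrm{a}}\\ L^{\mathrm{SA}} & 0_{(n+p_{\mathrm{f}}+p)\times p_{\mathrm{a}}}\end{bmatrix}$$ does not have any non-minimum phase zero dynamics; and 3) $\mathrm{rank}(L^{\mathrm{SA}}K_{\mathr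m{p}}^{\mathrm{SA}}D_{\mathrm{a}})=\mathrm{rank}(K_{\mathrm{p}}^{\mathrm{SA}}D_{\mathrm{a}})$.
   Context: Consider the augmented LTI cyber-physical system $\dot{x}(t)=Ax(t)+Bu(t)+B_{\mathrm{a}}a_{\mathrm{u}}(t)+F_1f_1(t)+F_2f_2(t)+N\omega(t)$, with $x(t)\in\mathbb{R}^{n+p_{\mathrm{f}}+p}$ (plant state of dimension $n$ augmented with a pseudo-actuator-fault subsystem representing sensor faults and noise), where $u(t)$ is the control command, $a_{\mathrm{u}}(t)\in\mathbb{R}^{m_{\mathrm{a}}}$ an actuator cyber attack, $f_1(t)$ an actuator fault, $f_2(t)$ a pseudo actuator fault (representing sensor faults), $\omega(t)$ noise. The plant-side measured output is $y_{\mathrm{p}}(t)=Cx(t)$ and the command-and-control (C\&C) side output is $y^*(t)=Cx(t)+D_{\mathrm{a}}a_{\mathrm{y}}(t)$ with $a_{\mathrm{y}}(t)\in\mathbb{R}^{p_{\mathrm{a}}}$ a sensor cyber attack; on the plant side the manipulated input satisfies $Bu^*(t)=Bu(t)+B_{\mathrm{a}}a_{\mathrm{u}}(t)$. For an index $\ell$, a C\&C side filter $\dot{z}_{\mathrm{c}}^{\ell}=F_{\mathrm{p}}^{\ell}z_{\mathrm{c}}^{\ell}+T_{\mathrm{p}}^{\ell}Bu+K_{\mathrm{p}}^{\ell}y^*$ and a plant side filter $\dot{z}_{\mathrm{p}}^{\ell}=F_{\mathrm{p}}^{\ell}z_{\mathrm{p}}^{\ell}+T_{\mathrm{p}}^{\ell}Bu^*+K_{\mathrm{p}}^{\ell}y_{\mathrm{p}}+L_{\mathrm{p}}^{\ell}(z_{\mathrm{p}}^{\ell}-(z_{\mathrm{c}}^{\ell}+D_{\mathrm{ac}}a_{\mathrm{c}}))$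 are used, where $a_{\mathrm{c}}(t)$ is a cyber attack on the communication link carrying $z_{\mathrm{c}}^{\ell}$ to the plant side, with signature $D_{\mathrm{ac}}$. A plant-side unknown-input-observer detector is $\dot{z}^{\ell}=F^{\ell}z^{\ell}+T^{\ell}Bu^*+K^{\ell}y_{\mathrm{p}}+L^{\ell}(z_{\mathrm{p}}^{\ell}-(z_{\mathrm{c}}^{\ell}+D_{\mathrm{ac}}a_{\mathrm{c}}))$, $\hat{x}^{\ell}=z^{\ell}+H^{\ell}y_{\mathrm{p}}$, with $K^{\ell}=K_1^{\ell}+K_2^{\ell}$, $F^{\ell}=A-H^{\ell}CA-K_1^{\ell}C$, $K_2^{\ell}=F^{\ell}H^{\ell}$. The error $e^{\ell}=x-\hat{x}^{\ell}$ and filter discrepancy $e_{\mathrm{p}}^{\ell}=z_{\mathrm{p}}^{\ell}-z_{\mathrm{c}}^{\ell}$ form the augmented error $\check{e}^{\ell}=[e^{\ell\top},e_{\mathrm{p}}^{\ell\top}]^\top$ whose state matrix is $\check{F}^{\ell}$. The residual is $res_{\ell}(t)=y_{\mathrm{p}}(t)-C\hat{x}^{\ell}(t)=Ce^{\ell}(t)$. The adversary knows all filter and detector parameters. The index $\mathrm{SA}$ denotes the filters/detector designed for sensor attack detection. *)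

(* Defs.v *)
From HB Require Import structures.
From mathcomp Require Import all_boot all_order all_algebra.
From mathcomp Require Import all_classical all_reals all_analysis.
Set Implicit Arguments. Unset Strict Implicit. Unset Printing Implicit Defensive.
Import Order.TTheory GRing.Theory Num.Theory.
Local Open Scope classical_set_scope.
Local Open Scope ring_scope.

Section Defs.
Variable R : realType.

Definition has_deriv (k : nat) (x : R -> 'cV[R]_k) (t : R) (v : 'cV[R]_k) : Prop :=
  forall i : 'I_k, is_derive t 1 (fun s => x s i ord0) (v i ord0).

(* M is Hurwitz: every (complex) eigenvalue a + i b of M has a < 0.  The
   complex eigenvector u + i w is written through its real and imaginary
   parts: M (u + i w) = (a + i b)(u + i w). *)
Definition hurwitz (k : nat) (M : 'M[R]_k) : Prop :=
  forall (a b : R) (u w : 'cV[R]_k), (u != 0 \/ w != 0) ->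
    M *m u = a *: u - b *: w -> M *m w = b *: u + a *: w -> a < 0.

(* The triplet (C, F, L), i.e. the system  e' = F e + L v,  y = C e, is left
   invertible: the input-output map (zero initial state) is injective. *)
Definition left_invertible (k r m : nat) (C : 'M[R]_(r, k)) (F : 'M[R]_k)
    (L : 'M[R]_(k, m)) : Prop :=
  forall (v : R -> 'cV[R]_m) (e : R -> 'cV[R]_k),
    e 0 = 0 ->
    (forall t, 0 <= t -> has_deriv e t (F *m e t + L *m v t)) ->
    (forall t, 0 <= t -> C *m e t = 0) ->
    forall t, 0 <= t -> v t = 0.

(* The system  xi' = M xi + G v,  w = Cz xi  (Rosenbrock system matrix
   [[sI - M, -G], [Cz, 0]]) has no non-minimum phase zero dynamics: every
   state trajectory along which the output is identically zero converges
   to 0. *)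
Definition no_nmp_zero_dynamics (k m r : nat) (M : 'M[R]_k) (G : 'M[R]_(k, m))
    (Cz : 'M[R]_(r, k)) : Prop :=
  forall (v : R -> 'cV[R]_m) (xi : R -> 'cV[R]_k),
    (forall t, 0 <= t -> has_deriv xi t (M *m xi t + G *m v t)) ->
    (forall t, 0 <= t -> Cz *m xi t = 0) ->
    forall i : 'I_k, (fun t => xi t i ord0) @ +oo%R --> (0 : R^o).

(* Plant / attack model (dimensions: state N = n+pf+p, control mu, actuator
   attack ma, faults q1 q2, noise qw, outputs ny, sensor attack pa,
   filter state nz, communication attack mc). *)
Record plant (N mu ma q1 q2 qw ny pa nz mc : nat) := Plant {
  pA : 'M[R]_N; pB : 'M[R]_(N, mu); pBa : 'M[R]_(N, ma);
  pF1 : 'M[R]_(N, q1); pF2 : 'M[R]_(N, q2); pN : 'M[R]_(N, qw);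
  pC : 'M[R]_(ny, N); pDa : 'M[R]_(ny, pa); pDac : 'M[R]_(nz, mc) }.

Record design (N ny nz : nat) := Design {
  dFp : 'M[R]_nz; dTp : 'M[R]_(nz, N); dKp : 'M[R]_(nz, ny); dLp : 'M[R]_nz;
  dF : 'M[R]_N; dT : 'M[R]_N; dK : 'M[R]_(N, ny); dK1 : 'M[R]_(N, ny);
  dK2 : 'M[R]_(N, ny); dH : 'M[R]_(N, ny); dL : 'M[R]_(N, nz) }.

Record signals (mu ma q1 q2 qw pa mc : nat) := Signals {
  su : R -> 'cV[R]_mu; sau : R -> 'cV[R]_ma; say : R -> 'cV[R]_pa;
  sac : R -> 'cV[R]_mc; sf1 : R -> 'cV[R]_q1; sf2 : R -> 'cV[R]_q2;
  sw : R -> 'cV[R]_qw }.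

Variables (N mu ma q1 q2 qw ny pa nz mc : nat).
Variables (P : plant N mu ma q1 q2 qw ny pa nz mc) (D : design N ny nz).

(* (x, zc, zp, z) is a trajectory (for t >= 0) of the closed system formed by
   the plant, the C&C side filter, the plant side filter and the detector,
   under the signals S. *)
Definition trajectory (S : signals mu ma q1 q2 qw pa mc)
    (x : R -> 'cV[R]_N) (zc zp : R -> 'cV[R]_nz) (z : R -> 'cV[R]_N) : Prop :=
  forall t, 0 <= t ->
  let Bu := pB P *m su S t in
  let Bustar := pB P *m su S t + pBa P *m sau S t in
  let yp := pC P *m x t in
  let ystar := pC P *m x t + pDa P *m say S t in
  let disc := zp t - (zc t + pDac P *m sac S t) in
  [/\ has_deriv x t (pA P *m x t + pB P *m su S t + pBa P *m sau S t
                      + pF1 P *m sf1 S t + pF2 P *m sf2 S t + pN P *m sw S t),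
      has_deriv zc t (dFp D *m zc t + dTp D *m Bu + dKp D *m ystar),
      has_deriv zp t (dFp D *m zp t + dTp D *m Bustar + dKp D *m yp
                      + dLp D *m disc)
    & has_deriv z t (dF D *m z t + dT D *m Bustar + dK D *m yp + dL D *m disc)].

Definition residual (x z : R -> 'cV[R]_N) (t : R) : 'cV[R]_ny :=
  pC P *m x t - pC P *m (z t + dH D *m (pC P *m x t)).

End Defs.

(* Main.v *)
Require Import Defs.
From HB Require Import structures.
From mathcomp Require Import all_boot all_order all_algebra.
From mathcomp Require Import all_classical all_reals all_analysis.
From mathcomp Require Import ring lra.
Import Order.TTheory GRing.Theory Num.Theory.
Local Open Scope ring_scope.

Section Helpers.
Context {R : realType}.

Lemma hd_add k (x y : R -> 'cV[R]_k) t u v :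
  has_deriv x t u -> has_deriv y t v -> has_deriv (fun s => x s + y s) t (u + v).
Proof.
move=> hx hy i; rewrite mxE.
have -> : (fun s => (x s + y s) i ord0) = (fun s => x s i ord0) + (fun s => y s i ord0).
  by apply/funext => s; rewrite !mxE.
exact: is_deriveD.
Qed.

Lemma hd_opp k (x : R -> 'cV[R]_k) t u :
  has_deriv x t u -> has_deriv (fun s => - x s) t (- u).
Proof.
move=> hx i; rewrite mxE.
have -> : (fun s => (- x s) i ord0) = - (fun s => x s i ord0).
  by apply/funext => s; rewrite !mxE.
exact: is_deriveN.
Qed.

Lemma hd_sub k (x y : R -> 'cV[R]_k) t u v :
  has_deriv x t u -> has_deriv y t v -> has_deriv (fun s => x s - y s) t (u - v).
Proof. by move=> hx hy; apply: hd_add => //; apply: hd_opp. Qed.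

Lemma hd_mul k l (M : 'M[R]_(l, k)) (x : R -> 'cV[R]_k) t v :
  has_deriv x t v -> has_deriv (fun s => M *m x s) t (M *m v).
Proof.
move=> hx i; rewrite mxE.
have -> : (fun s => (M *m x s) i ord0) =
   \sum_(j < k) (M i j \*: (fun s => x s j ord0)).
  by apply/funext => s; rewrite !mxE fct_sumE; apply: eq_bigr => j _.
apply: is_derive_sum => j; exact: is_deriveZ.
Qed.

Lemma hd_ext k (x y : R -> 'cV[R]_k) t u v :
  (forall s, x s = y s) -> u = v -> has_deriv x t u -> has_deriv y t v.
Proof. by move=> e <-; have -> : x = y by apply/funext. Qed.


Lemma ode_uniq k (M : 'M[R]_k) (x : R -> 'cV[R]_k) :
  x 0 = 0 -> (forall t, 0 <= t -> has_deriv x t (M *m x t)) ->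
  forall t, 0 <= t -> x t = 0.
Proof.
move=> x0 hd.
pose c : R := 2 * \sum_(i < k) \sum_(j < k) `|M i j|.
have c0 : 0 <= c.
  by rewrite mulr_ge0 // sumr_ge0 // => i _; rewrite sumr_ge0.
pose g := \sum_(i < k) ((fun s => x s i ord0) ^+ 2).
have gE : forall s, g s = \sum_(i < k) x s i ord0 ^+ 2.
  by move=> s; rewrite /g fct_sumE; apply: eq_bigr => i _; rewrite exprfctE.
pose dg s := \sum_(i < k) (2%:R * x s i ord0 ^+ 1) *: (M *m x s) i ord0.
have hg : forall t : R, 0 <= t -> is_derive t 1 g (dg t).
  move=> t t0; apply: is_derive_sum => i; apply: is_deriveX; exact: hd t t0 i.
have gi : forall s i, x s i ord0 ^+ 2 <= g s.
  move=> s i; rewrite gE (bigD1 i) //= lerDl; apply: sumr_ge0 => j _.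
  exact: sqr_ge0.
have g0 : forall s, 0 <= g s.
  by move=> s; rewrite gE; apply: sumr_ge0 => i _; exact: sqr_ge0.
have dgle : forall s, dg s <= c * g s.
  move=> s; rewrite /dg /c.
  have -> : \sum_(i < k) (2%:R * x s i ord0 ^+ 1) *: (M *m x s) i ord0 =
     \sum_(i < k) \sum_(j < k) 2 * (M i j * (x s i ord0 * x s j ord0)).
    apply: eq_bigr => i _; rewrite mxE [in LHS]/GRing.scale /= mulr_sumr; apply: eq_bigr => j _.
    rewrite expr1; ring.
  apply: (@le_trans _ _ (\sum_(i < k) \sum_(j < k) 2 * (`|M i j| * g s))).
    apply: ler_sum => i _; apply: ler_sum => j _; rewrite ler_pM2l //.
    apply: (le_trans (ler_norm _)); rewrite normrM ler_wpM2l //.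
    rewrite normrM.
    have := gi s i; have := gi s j.
    rewrite -(real_normK (num_real (x s i ord0))) -(real_normK (num_real (x s j ord0))).
    move: `|x s i ord0| `|x s j ord0| => p q hq hp.
    have := sqr_ge0 (p - q); nra.
  rewrite -mulrA mulr_suml big_distrr /=; rewrite le_eqVlt; apply/orP; left; apply/eqP; apply: eq_bigr => i _.
  by rewrite mulr_suml big_distrr.
pose e := expR \o (fun s : R => - (c * s)).
have he : forall t : R, is_derive t 1 e (expR (- (c * t)) * (- c)).
  move=> t; apply: is_derive1_comp.
  have hl : is_derive t 1 (- (c \*: (@id R))) (- (c *: (1:R))).
    by apply: is_deriveN; apply: is_deriveZ; exact: is_derive_id.
  have -> : (fun s : R => - (c * s)) = - (c \*: (@id R)) by apply/funext.
  have e1 : - (c *: (1:R)) = - c by congr (- _); exact: mulr1.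
  rewrite e1 in hl. exact: hl.
pose h := g * e.
have hh : forall t : R, 0 <= t -> is_derive t 1 h (g t *: (expR (- (c * t)) * (- c)) + e t *: dg t).
  by move=> t t0; apply: is_deriveM => //; exact: hg.
have key : forall t : R, 0 <= t -> h t <= h 0.
  move=> t t0; apply: (@ler0_derive1_nincry _ h 0) => //.
  - move=> y; rewrite in_itv /= andbT => /ltW y0; have [] := hh y y0; done.
  - move=> y; rewrite in_itv /= andbT => /ltW y0.
    rewrite derive1E; have [_ ->] := hh y y0.
    rewrite /e /= /GRing.scale /=.
    have := dgle y; have := expR_gt0 (- (c * y)); nra.
  - apply: derivable_within_continuous => y; rewrite in_itv /= andbT => y0.
    by have [] := hh y y0.
move=> t t0.
have h00 : h 0 = 0 by rewrite /h mulrfctE /= gE x0 big1 ?mul0r // => i _; rewrite mxE expr0n.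
have := key t t0; rewrite h00 /h mulrfctE /= => ht.
have gt0 : g t = 0.
  have := expR_gt0 (- (c * t)); have := g0 t; rewrite /e /= in ht; nra.
apply/matrixP => i j; rewrite mxE (ord1 j).
have : x t i ord0 ^+ 2 = 0.
  apply/eqP; rewrite eq_le sqr_ge0 andbT; by rewrite -gt0 gi.
by move/eqP; rewrite sqrf_eq0 => /eqP.
Qed.


Lemma deriv_zero_right (f : R -> R) (t l : R) :
  (forall s, t <= s -> f s = 0) -> is_derive t 1 f l -> l = 0.
Proof.
move=> f0 [df <-].
rewrite /derive cvg_at_rightE; last exact: df.
rewrite (@lim_near_cst _ _ _ _ _ 0) //.
near=> h.
rewrite /= !f0 ?subrr ?scaler0 //.
rewrite /GRing.scale /= mulr1 lerDr; apply: ltW; near: h; exact: nbhs_right_gt.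
Unshelve. all: by end_near.
Qed.

Lemma hd_zero k (x : R -> 'cV[R]_k) t v :
  (forall s, 0 <= s -> x s = 0) -> 0 <= t -> has_deriv x t v -> v = 0.
Proof.
move=> x0 t0 hx; apply/matrixP => i j; rewrite (ord1 j) mxE.
apply: (@deriv_zero_right _ t _ _ (hx i)) => s ts.
by rewrite x0 ?mxE // (le_trans t0 ts).
Qed.


Lemma hd_eq k (x : R -> 'cV[R]_k) t u v : has_deriv x t u -> u = v -> has_deriv x t v.
Proof. by move=> h <-. Qed.

End Helpers.
Arguments hd_add {R k x y t u v}.
Arguments hd_opp {R k x t u}.
Arguments hd_sub {R k x y t u v}.
Arguments hd_mul {R k l} M {x t v}.
Arguments hd_eq {R k x t u v}.
Arguments hd_zero {R k x t v}.
Arguments ode_uniq {R k M x}.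

Ltac expand := rewrite ?(mulmxDr, mulmxBr, mulmxDl, mulmxBl, mulmxA, mul1mx,
  mulNmx, mulmxN, mul0mx, mulmx0, mulmx1).
Ltac entry := apply/matrixP => i j; rewrite !mxE; ring.

Lemma common (R : realType) N mu ma q1 q2 qw ny pa nz mc
  (P : plant R N mu ma q1 q2 qw ny pa nz mc) (D : design R N ny nz)
  (S1 S2 : signals R mu ma q1 q2 qw pa mc)
  (x1 x2 z1 z2 : R -> 'cV[R]_N) (zc1 zp1 zc2 zp2 : R -> 'cV[R]_nz) :
  dK D = dK1 D + dK2 D ->
  dF D = pA P - dH D *m pC P *m pA P - dK1 D *m pC P ->
  dK2 D = dF D *m dH D ->
  dT D = 1%:M - dH D *m pC P ->
  (1%:M - dH D *m pC P) *m pF1 P = 0 ->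
  (1%:M - dH D *m pC P) *m pF2 P = 0 ->
  dL D *m pDac P = 0 ->
  dLp D *m pDac P = 0 ->
  dTp D *m pBa P = 0 ->
  trajectory P D S1 x1 zc1 zp1 z1 ->
  trajectory P D S2 x2 zc2 zp2 z2 ->
  (forall t, 0 <= t -> su S1 t = su S2 t) ->
  (forall t, 0 <= t -> sac S1 t = sac S2 t) ->
  (forall t, 0 <= t -> sw S1 t = sw S2 t) ->
  forall t, 0 <= t ->
  has_deriv (fun s => (zp1 s - zc1 s) - (zp2 s - zc2 s)) t
    ((dFp D + dLp D) *m ((zp1 t - zc1 t) - (zp2 t - zc2 t))
      - dKp D *m pDa P *m (say S1 t - say S2 t))
  /\ has_deriv (fun s => (1%:M - dH D *m pC P) *m (x1 s - x2 s) - (z1 s - z2 s)) t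
    (dF D *m ((1%:M - dH D *m pC P) *m (x1 t - x2 t) - (z1 t - z2 t))
      - dL D *m ((zp1 t - zc1 t) - (zp2 t - zc2 t))).
Proof.
move=> hK hF hK2 hT hF1 hF2 hLD hLpD hTB tr1 tr2 hu hac hw t t0.
have [hx1 hzc1 hzp1 hz1] := tr1 t t0.
have [hx2 hzc2 hzp2 hz2] := tr2 t t0.
rewrite (hu t t0) (hac t t0) (hw t t0) in hx1 hzc1 hzp1 hz1.
split.
  apply: hd_eq (hd_sub (hd_sub hzp1 hzc1) (hd_sub hzp2 hzc2)) _.
  rewrite ?(mulmxDr, mulmxN, mulmxA) ?hTB ?hLpD ?mul0mx.
  expand; apply/matrixP => i j; rewrite !mxE. lra.
apply: hd_eq (hd_sub (hd_mul (1%:M - dH D *m pC P) (hd_sub hx1 hx2)) (hd_sub hz1 hz2)) _.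
rewrite ?(mulmxDr, mulmxN, mulmxA) ?hF1 ?hF2 ?hLD ?mul0mx.
rewrite hT hK hK2 hF.
expand; apply/matrixP => i j; rewrite !mxE; lra.
Qed.
Arguments common {R N mu ma q1 q2 qw ny pa nz mc P D S1 S2 x1 x2 z1 z2 zc1 zp1 zc2 zp2}.

Theorem proposition2 (R : realType) (n pf p mu ma q1 q2 qw ny pa nz mc : nat)
  (P : plant R (n + pf + p) mu ma q1 q2 qw ny pa nz mc)
  (D : design R (n + pf + p) ny nz) :
  (* standing assumption: the adversary does not access all channels *)
  (\rank (pDac P) < n)%N ->
  (* UIO detector structure *)
  dK D = dK1 D + dK2 D ->
  dF D = pA P - dH D *m pC P *m pA P - dK1 D *m pC P ->
  dK2 D = dF D *m dH D ->
  (* design conditions for l = SA *)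
  dT D = 1%:M - dH D *m pC P ->
  (1%:M - dH D *m pC P) *m pF1 P = 0 ->
  (1%:M - dH D *m pC P) *m pF2 P = 0 ->
  dL D *m pDac P = 0 ->
  dLp D *m pDac P = 0 ->
  left_invertible (pC P) (dF D) (dL D) ->
  hurwitz (block_mx (dF D) (- dL D) 0 (dFp D + dLp D)) ->
  (* 1) *)
  dTp D *m pBa P = 0 ->
  (* 2) Rosenbrock matrix [[sI - (Fp + Lp), Kp Da], [L, 0]] *)
  no_nmp_zero_dynamics (dFp D + dLp D) (- (dKp D *m pDa P)) (dL D) ->
  (* 3) *)
  \rank (dL D *m dKp D *m pDa P) = \rank (dKp D *m pDa P) ->
  (* conclusion (i): res_SA is decoupled from a_u, f1, f2 *)
  (forall (S1 S2 : signals R mu ma q1 q2 qw pa mc)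
          (x1 x2 z1 z2 : R -> 'cV[R]_(n + pf + p)) (zc1 zp1 zc2 zp2 : R -> 'cV[R]_nz),
     trajectory P D S1 x1 zc1 zp1 z1 ->
     trajectory P D S2 x2 zc2 zp2 z2 ->
     (forall t, 0 <= t -> su S1 t = su S2 t) ->
     (forall t, 0 <= t -> say S1 t = say S2 t) ->
     (forall t, 0 <= t -> sac S1 t = sac S2 t) ->
     (forall t, 0 <= t -> sw S1 t = sw S2 t) ->
     x1 0 = x2 0 -> zc1 0 = zc2 0 -> zp1 0 = zp2 0 -> z1 0 = z2 0 ->
     forall t, 0 <= t -> residual P D x1 z1 t = residual P D x2 z2 t)
  /\
  (* conclusion (ii): res_SA is affected by a_y: a sensor attack leaving the
     residual unchanged has no effect on the side filters *)
  (forall (S1 S2 : signals R mu ma q1 q2 qw pa mc)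
          (x1 x2 z1 z2 : R -> 'cV[R]_(n + pf + p)) (zc1 zp1 zc2 zp2 : R -> 'cV[R]_nz),
     trajectory P D S1 x1 zc1 zp1 z1 ->
     trajectory P D S2 x2 zc2 zp2 z2 ->
     (forall t, 0 <= t -> su S1 t = su S2 t) ->
     (forall t, 0 <= t -> sac S1 t = sac S2 t) ->
     (forall t, 0 <= t -> sw S1 t = sw S2 t) ->
     x1 0 = x2 0 -> zc1 0 = zc2 0 -> zp1 0 = zp2 0 -> z1 0 = z2 0 ->
     (forall t, 0 <= t -> residual P D x1 z1 t = residual P D x2 z2 t) ->
     forall t, 0 <= t -> dKp D *m pDa P *m say S1 t = dKp D *m pDa P *m say S2 t).
Proof.
move=> hrk hK hF hK2 hT hF1 hF2 hLD hLpD hli hhur hTB hnmp hrank.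
split.
- move=> S1 S2 x1 x2 z1 z2 zc1 zp1 zc2 zp2 tr1 tr2 hu hay hac hw ex ezc ezp ez.
  have cm := common hK hF hK2 hT hF1 hF2 hLD hLpD hTB tr1 tr2 hu hac hw.
  have dep0 := ode_uniq (M := dFp D + dLp D)
    (x := fun s => (zp1 s - zc1 s) - (zp2 s - zc2 s)).
  have {}dep0 : forall t, 0 <= t -> (zp1 t - zc1 t) - (zp2 t - zc2 t) = 0.
    apply: dep0; first by rewrite ezp ezc subrr.
    move=> t t0; have [h _] := cm t t0; apply: hd_eq h _.
    by rewrite (hay t t0) subrr mulmx0 subr0.
  have de0 := ode_uniq (M := dF D)
    (x := fun s => (1%:M - dH D *m pC P) *m (x1 s - x2 s) - (z1 s - z2 s)).
  have {}de0 : forall t, 0 <= t ->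
      (1%:M - dH D *m pC P) *m (x1 t - x2 t) - (z1 t - z2 t) = 0.
    apply: de0; first by rewrite ex ez !subrr mulmx0 subr0.
    move=> t t0; have [_ h] := cm t t0; apply: hd_eq h _.
    by rewrite dep0 // mulmx0 subr0.
  move=> t t0; apply/eqP; rewrite -subr_eq0; apply/eqP.
  have : pC P *m ((1%:M - dH D *m pC P) *m (x1 t - x2 t) - (z1 t - z2 t)) = 0.
    by rewrite de0 // mulmx0.
  move <-; rewrite /residual.
  expand; apply/matrixP => i j; rewrite !mxE; lra.
- move=> S1 S2 x1 x2 z1 z2 zc1 zp1 zc2 zp2 tr1 tr2 hu hac hw ex ezc ezp ez hres.
  have cm := common hK hF hK2 hT hF1 hF2 hLD hLpD hTB tr1 tr2 hu hac hw.
  have H := hli (fun s => - ((zp1 s - zc1 s) - (zp2 s - zc2 s)))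
    (fun s => (1%:M - dH D *m pC P) *m (x1 s - x2 s) - (z1 s - z2 s)).
  have dep0 : forall t, 0 <= t -> (zp1 t - zc1 t) - (zp2 t - zc2 t) = 0.
    move=> t t0; apply/eqP; rewrite -oppr_eq0; apply/eqP; apply: (H _ _ _ t t0).
    + by rewrite ex ez !subrr mulmx0 subr0.
    + move=> s s0; have [_ h] := cm s s0; apply: hd_eq h _.
      by rewrite mulmxN.
    + move=> s s0; have := hres s s0; rewrite /residual => /eqP; rewrite -subr_eq0 => /eqP <-.
      expand; apply/matrixP => i j; rewrite !mxE; lra.
  move=> t t0; have [h _] := cm t t0.
  have := hd_zero dep0 t0 h.
  rewrite dep0 // mulmx0 sub0r => /eqP; rewrite oppr_eq0 mulmxBr subr_eq0 => /eqP.
  done.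
Qed.
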